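(* Let $c\ge 0$ be a constant integer and let $f:\{0,1\}^n\to\{0,1\}^{n+c}$ be computable by polynomial-size circuits. Let $T_1(n)=\{x\in\{0,1\}^n: |f^{-1}(f(x))|=1\}$. If there exist a polynomial $p$ and infinitely many $n$ such that $$\frac{|T_1(n)|}{2^n}\ \ge\ \frac{2^{1+c}}{2^{1+c}+1}+\frac{1}{p(n)},$$ then $f$ does not have a super-core. In particular, for length-preserving $f$ ($c=0$) the condition reads $|T_1(n)|/2^n\ge 2/3+1/p(n)$.
   Context: A predicate $b$ computable by polynomial-size circuits is a super-core of $f:\{0,1\}^n\to\{0,1\}^{m(n)}$ if there do not exist a nondeterministic polynomial-size circuit family $\mathcal{A}_1$ (accepting iff some witness gives output 1), a co-nondeterministic polynomial-size circuit family $\mathcal{A}_2$ (rejecting iff some witness gives output 0), a polynomial $p$ and infinitely many $n$ such that either $\Pr_{x\in\{0,1\}^n}[\mathcal{A}_1(f(x),1^n)=b(x)=0]+\tfrac12\Pr_{y\in\{0,1\}^{m(n)}}[\mathcal{A}_1(y,1^n)=1]\ge \tfrac12+\tfrac1{p(n)}$ or $\Pr_{x}[\mathcal{A}_2(f(x),1^n)=b(x)=1]+\tfrac12\Pr_{y}[\mathcal{A}_2(y,1^n)=0]\ge \tfrac12+\tfrac1{p(n)}$ (uniform distributions). *)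

(* Defs.v *)
From HB Require Import structures.
From mathcomp Require Import all_boot all_order all_algebra.
Set Implicit Arguments. Unset Strict Implicit. Unset Printing Implicit Defensive.
Import Order.TTheory GRing.Theory Num.Theory.
Local Open Scope ring_scope.

(* Wires are numbered: first the inputs 0..k-1, then gate g_j gets wire k+j.
   A gate may only read wires already computed (out-of-range wires read false). *)
Inductive gate := GAnd of nat & nat | GOr of nat & nat | GNot of nat | GConst of bool.

Record circuit := Circuit { gates : seq gate; outs : seq nat }.

Definition eval_gate (w : seq bool) (g : gate) : bool :=
  match g with
  | GAnd i j => nth false w i && nth false w j
  | GOr i j => nth false w i || nth false w j
  | GNot i => ~~ nth false w i
  | GConst b => b
  end.

Definition wires (inp : seq bool) (gs : seq gate) : seq bool :=
  foldl (fun w g => rcons w (eval_gate w g)) inp gs.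

Definition eval (C : circuit) (inp : seq bool) : seq bool :=
  map (nth false (wires inp (gates C))) (outs C).

Definition csize (C : circuit) : nat := size (gates C).

Definition bits (n : nat) := n.-tuple bool.

Definition pos_poly (p : {poly rat}) : Prop := forall n : nat, 0 < p.[n%:R].

Definition poly_size_computable (m : nat -> nat)
    (f : forall n, bits n -> bits (m n)) : Prop :=
  exists q : {poly rat}, forall n, exists C : circuit,
    (csize C)%:R <= q.[n%:R] /\ forall x : bits n, eval C x = val (f n x).

Definition poly_size_pred (b : forall n, bits n -> bool) : Prop :=
  exists q : {poly rat}, forall n, exists C : circuit,
    (csize C)%:R <= q.[n%:R] /\ forall x : bits n, eval C x = [:: b n x].

(* A family of (witness-taking) polynomial-size circuits with one output bit,
   reading an input of length m(n) followed by a witness of length wl(n). *)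
Definition poly_size_witness_family (A : nat -> circuit) (wl : nat -> nat) : Prop :=
  exists q : {poly rat}, forall n,
    (csize (A n))%:R <= q.[n%:R] /\ (wl n)%:R <= q.[n%:R] /\ size (outs (A n)) = 1.

Definition ndet_out (A : nat -> circuit) (wl : nat -> nat) (n : nat) (y : seq bool) : bool :=
  [exists w : bits (wl n), eval (A n) (y ++ val w) == [:: true]].

Definition condet_out (A : nat -> circuit) (wl : nat -> nat) (n : nat) (y : seq bool) : bool :=
  ~~ [exists w : bits (wl n), eval (A n) (y ++ val w) == [:: false]].

Definition prob (n : nat) (P : pred (bits n)) : rat := #|[set x | P x]|%:R / (2 ^ n)%:R.

Definition infinitely_often (P : nat -> Prop) : Prop := forall N, exists n : nat, (N <= n)%N /\ P n.

Definition super_core (m : nat -> nat) (f : forall n, bits n -> bits (m n))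
    (b : forall n, bits n -> bool) : Prop :=
  poly_size_pred b /\
  ~ exists (A1 : nat -> circuit) (wl1 : nat -> nat)
           (A2 : nat -> circuit) (wl2 : nat -> nat) (p : {poly rat}),
      [/\ poly_size_witness_family A1 wl1, poly_size_witness_family A2 wl2,
          pos_poly p &
          infinitely_often (fun n =>
            (prob [pred x | ~~ ndet_out A1 wl1 n (val (f n x)) && ~~ b n x]
               + 2%:R^-1 * prob [pred y : bits (m n) | ndet_out A1 wl1 n (val y)]
             >= 2%:R^-1 + (p.[n%:R])^-1)
            \/
            (prob [pred x | condet_out A2 wl2 n (val (f n x)) && b n x]
               + 2%:R^-1 * prob [pred y : bits (m n) | ~~ condet_out A2 wl2 n (val y)]
             >= 2%:R^-1 + (p.[n%:R])^-1))].

Definition T1 (m : nat -> nat) (f : forall n, bits n -> bits (m n)) (n : nat) : {set bits n} :=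
  [set x | #|[set x' | f n x' == f n x]| == 1%N].

(* Main.v *)
Require Import Defs.
From mathcomp Require Import all_boot all_order all_algebra.
From mathcomp Require Import zify ring lra.
Import Order.TTheory GRing.Theory Num.Theory.

Lemma wires_cat inp gs1 gs2 : wires inp (gs1 ++ gs2) = wires (wires inp gs1) gs2.
Proof. by rewrite /wires foldl_cat. Qed.

Lemma wires_rcons inp gs g :
  wires inp (rcons gs g) = rcons (wires inp gs) (eval_gate (wires inp gs) g).
Proof. by rewrite /wires foldl_rcons. Qed.

Lemma size_wires inp gs : size (wires inp gs) = (size inp + size gs)%N.
Proof.
elim/last_ind: gs => [|gs g IH]; first by rewrite addn0.
by rewrite wires_rcons !size_rcons IH addnS.
Qed.

Lemma wires_ext inp gs : exists e, wires inp gs = inp ++ e.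
Proof.
elim/last_ind: gs => [|gs g [e IH]]; first by exists [::]; rewrite cats0.
by exists (rcons e (eval_gate (wires inp gs) g)); rewrite wires_rcons IH rcons_cat.
Qed.

Lemma nth_wires inp gs i : (i < size inp)%N -> nth false (wires inp gs) i = nth false inp i.
Proof. by case: (wires_ext inp gs) => e ->; move=> hi; rewrite nth_cat hi. Qed.

Definition rel_idx (k off base i : nat) : nat :=
  if (i < k)%N then (off + i)%N else (base + (i - k))%N.

Definition rel_gate k off base (g : gate) : gate :=
  match g with
  | GAnd i j => GAnd (rel_idx k off base i) (rel_idx k off base j)
  | GOr i j => GOr (rel_idx k off base i) (rel_idx k off base j)
  | GNot i => GNot (rel_idx k off base i)
  | GConst b => GConst b
  end.

Lemma nth_rel k off (W inp X : seq bool) i :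
  size inp = k -> (off + k <= size W)%N ->
  (forall i, (i < k)%N -> nth false W (off + i) = nth false inp i) ->
  (exists e, X = inp ++ e) ->
  nth false (W ++ drop k X) (rel_idx k off (size W) i) = nth false X i.
Proof.
move=> hk hW hnth [e ->]; rewrite /rel_idx.
case: ifP => hi.
  rewrite nth_cat ifT; last by apply: leq_trans hW; rewrite ltn_add2l.
  by rewrite hnth // nth_cat hk hi.
rewrite nth_cat ltnNge leq_addr /= addKn nth_drop subnKC //.
by rewrite leqNgt hi.
Qed.

Lemma wires_rel k off (W inp : seq bool) gs :
  size inp = k -> (off + k <= size W)%N ->
  (forall i, (i < k)%N -> nth false W (off + i) = nth false inp i) ->
  wires W (map (rel_gate k off (size W)) gs) = W ++ drop k (wires inp gs).
Proof.
move=> hk hW hnth.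
elim/last_ind: gs => [|gs g IH].
  by rewrite /= /wires /= drop_oversize ?cats0 // hk.
rewrite map_rcons !wires_rcons IH drop_rcons; last by rewrite size_wires hk leq_addr.
rewrite rcons_cat; congr (_ ++ rcons _ _).
have He := wires_ext inp gs.
by case: g => [i j|i j|i|b] /=; rewrite ?(nth_rel _ _ _ _ _ _ hk hW hnth He).
Qed.

Fixpoint cmp (s acc : nat) (xs ys : seq nat) : seq gate :=
  match xs, ys with
  | a :: xs1, b :: ys1 =>
      [:: GNot a; GNot b; GAnd a b; GAnd s (s + 1); GOr (s + 2) (s + 3); GAnd acc (s + 4)]
        ++ cmp (s + 6) (s + 5) xs1 ys1
  | _, _ => [::]
  end.

Fixpoint cmp_out (s acc : nat) (xs ys : seq nat) : nat :=
  match xs, ys with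
  | a :: xs1, b :: ys1 => cmp_out (s + 6) (s + 5) xs1 ys1
  | _, _ => acc
  end.

Lemma all2_cat (W e : seq bool) xs ys :
  all (fun a => a < size W)%N xs -> all (fun a => a < size W)%N ys ->
  all2 (fun a b => nth false (W ++ e) a == nth false (W ++ e) b) xs ys
  = all2 (fun a b => nth false W a == nth false W b) xs ys.
Proof.
elim: xs ys => [|a xs IH] [|b ys] //= /andP[ha hx] /andP[hb hy].
by rewrite !nth_cat ha hb IH.
Qed.

Lemma cmp_spec xs ys s acc W :
  size xs = size ys ->
  size W = s -> (acc < s)%N -> all (fun a => a < s)%N xs -> all (fun a => a < s)%N ys ->
  nth false (wires W (cmp s acc xs ys)) (cmp_out s acc xs ys)
  = nth false W acc && all2 (fun a b => nth false W a == nth false W b) xs ys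
  /\ size (cmp s acc xs ys) = (6 * size xs)%N.
Proof.
elim: xs ys s acc W => [|a xs IH] [|b ys] s acc W //.
  by move=> _ _ _ _ _; rewrite andbT.
move=> [hsz] hs hacc /andP[ha hx] /andP[hb hy].
have r1 : forall i k, (i < s)%N -> (i < s + k)%N = true.
  by move=> i k hi; apply: leq_trans hi (leq_addr _ _).
have r3 : forall k, (s < s + k)%N = (0 < k)%N by move=> k; rewrite -{1}(addn0 s) ltn_add2l.
rewrite /cmp -/cmp /cmp_out -/cmp_out wires_cat.
set W1 := wires W _.
have hW1 : W1 = W ++ [:: ~~ nth false W a; ~~ nth false W b;
     nth false W a && nth false W b; ~~ nth false W a && ~~ nth false W b;
     (nth false W a && nth false W b) || (~~ nth false W a && ~~ nth false W b);
     nth false W acc && ((nth false W a && nth false W b) || (~~ nth false W a && ~~ nth false W b))].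
  rewrite /W1 /wires /= -!cats1 -!catA /=.
  by rewrite !nth_cat /= hs ha hb hacc ltnn subnn !(ltnNge (s + _) s) !leq_addr !addKn.
have hszW1 : size W1 = (s + 6)%N by rewrite hW1 size_cat hs.
have mono : forall l, all (fun a => a < s)%N l -> all (fun a => a < s + 6)%N l.
  move=> l; apply: sub_all => i /= hi; exact: r1.
have h56 : (s + 5 < s + 6)%N by rewrite ltn_add2l.
have [IH1 IH2] := IH ys (s + 6)%N (s + 5)%N W1 hsz hszW1 h56 (mono _ hx) (mono _ hy).
split; last by rewrite size_cat IH2 /= mulnS.
rewrite IH1 /= hW1 all2_cat ?hs // nth_cat hs ltnNge leq_addr /= addKn /=.
by case: (nth false W a); case: (nth false W b); case: (nth false W acc).
Qed.



Definition rout k off base sz Z o := if (o < k + sz)%N then rel_idx k off base o else Z.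

Section Core.
Variables (n c : nat) (Cf Cb : circuit).
Definition m := (n + c)%N.
Definition L0 := (m + n)%N.
Definition bf := (L0 + 2)%N.
Definition bb := (bf + size (gates Cf))%N.
Definition s3 := (bb + size (gates Cb))%N.
Definition Bw := rout n m bb (size (gates Cb)) L0 (head 0%N (outs Cb)).
Definition ysf := map (rout n m bf (size (gates Cf)) L0) (outs Cf).
Definition G := [:: GConst false; GConst true] ++ map (rel_gate n m bf) (gates Cf)
   ++ map (rel_gate n m bb) (gates Cb) ++ [:: GNot Bw] ++ cmp s3.+1 (L0 + 1) (iota 0 m) ysf.
Definition Ei := cmp_out s3.+1 (L0 + 1) (iota 0 m) ysf.
Definition s4 := (L0 + size G)%N.
Definition A1c := Circuit (G ++ [:: GAnd Ei Bw]) [:: s4].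
Definition A2c := Circuit (G ++ [:: GAnd Ei s3; GNot s4]) [:: s4.+1].

Lemma all2_map2 (S T U V : Type) (f : S -> U) (g : T -> V) (r : U -> V -> bool) s t :
  all2 r (map f s) (map g t) = all2 (fun a b => r (f a) (g b)) s t.
Proof. by elim: s t => [|a s IH] [|b t] //=; rewrite IH. Qed.

Lemma eq_in_all2' (T : eqType) (U : Type) (r1 r2 : T -> U -> bool) s t :
  (forall a b, a \in s -> r1 a b = r2 a b) -> all2 r1 s t = all2 r2 s t.
Proof.
elim: s t => [|a s IH] [|b t] //= h.
by rewrite h ?mem_head // IH // => x y hx; apply: h; rewrite in_cons hx orbT.
Qed.

Lemma nth_catL (W e : seq bool) i : (i < size W)%N -> nth false (W ++ e) i = nth false W i.
Proof. by move=> h; rewrite nth_cat h. Qed.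

Lemma core (y w : seq bool) (fw : seq bool) (bw : bool) :
  size y = m -> size w = n -> eval Cf w = fw -> size fw = m -> eval Cb w = [:: bw] ->
  size (wires (y ++ w) G) = s4 /\
  nth false (wires (y ++ w) G) Ei = (y == fw) /\
  nth false (wires (y ++ w) G) Bw = bw /\
  nth false (wires (y ++ w) G) s3 = ~~ bw.
Proof.
move=> hy hw hf hfw hb.
set Xf := wires w (gates Cf); set Xb := wires w (gates Cb).
have hXf : size Xf = (n + size (gates Cf))%N by rewrite size_wires hw.
have hXb : size Xb = (n + size (gates Cb))%N by rewrite size_wires hw.
set W0 := (y ++ w) ++ [:: false; true].
have hW0 : wires (y ++ w) [:: GConst false; GConst true] = W0.
  by rewrite /wires /= -!cats1 -catA.
have sW0 : size W0 = bf by rewrite /W0 !size_cat hy hw /bf /L0.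
have nW0 : forall i, (i < n)%N -> nth false W0 (m + i) = nth false w i.
  move=> i hi; rewrite nth_catL ?size_cat ?hy ?hw; last by rewrite ltn_add2l.
  by rewrite nth_cat hy ltnNge leq_addr /= addKn.
set W1 := W0 ++ drop n Xf.
have hW1 : wires W0 (map (rel_gate n m bf) (gates Cf)) = W1.
  by rewrite -sW0; apply: wires_rel => //; rewrite sW0 /bf /L0; lia.
have sW1 : size W1 = bb by rewrite /W1 size_cat size_drop sW0 hXf /bb; lia.
have nW1 : forall i, (i < n)%N -> nth false W1 (m + i) = nth false w i.
  by move=> i hi; rewrite nth_catL ?nW0 // sW0 /bf /L0; lia.
set W2 := W1 ++ drop n Xb.
have hW2 : wires W1 (map (rel_gate n m bb) (gates Cb)) = W2.
  by rewrite -sW1; apply: wires_rel => //; rewrite sW1 /bb /bf /L0; lia.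
have sW2 : size W2 = s3 by rewrite /W2 size_cat size_drop sW1 hXb /s3; lia.
have pW2 : forall i, (i < bf)%N -> nth false W2 i = nth false W0 i.
  move=> i hi; rewrite /W2 nth_catL; last by rewrite sW1 /bb; lia.
  by rewrite /W1 nth_catL // sW0.
have vZ : nth false W2 L0 = false.
  rewrite pW2 /bf; last lia.
  by rewrite /W0 nth_cat size_cat hy hw /L0 ltnn subnn.
have vOne : nth false W2 (L0 + 1) = true.
  rewrite pW2 /bf; last lia.
  by rewrite /W0 nth_cat size_cat hy hw /L0 ltnNge leq_addr /= addKn.
have vy : forall i, (i < m)%N -> nth false W2 i = nth false y i.
  move=> i hi; rewrite pW2 /bf /L0; last lia.
  by rewrite /W0 nth_catL ?size_cat ?hy ?hw; [rewrite nth_cat hy hi | lia].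
have vf : forall o, nth false W2 (rout n m bf (size (gates Cf)) L0 o) = nth false Xf o.
  move=> o; rewrite /rout; case: ifP => ho; last first.
    by rewrite vZ nth_default // hXf leqNgt ho.
  rewrite /W2 nth_catL; last by rewrite sW1 /rel_idx /bb /bf /L0; case: ifP; lia.
  rewrite /W1 -sW0 (nth_rel _ _ _ _ _ _ hw) //; first by rewrite sW0 /bf /L0; lia.
  exact: wires_ext.
have vb : forall o, nth false W2 (rout n m bb (size (gates Cb)) L0 o) = nth false Xb o.
  move=> o; rewrite /rout; case: ifP => ho; last first.
    by rewrite vZ nth_default // hXb leqNgt ho.
  rewrite /W2 -sW1 (nth_rel _ _ _ _ _ _ hw) //; first by rewrite sW1 /bb /bf /L0; lia.
  exact: wires_ext.
have hob : exists ob, outs Cb = [:: ob] /\ nth false Xb ob = bw.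
  move: hb; rewrite /eval; case: (outs Cb) => [|ob [|? ?]] //= [<-].
  by exists ob.
have [ob [hob1 hob2]] := hob.
have BwLt : (Bw < s3)%N.
  by rewrite /Bw /rout /rel_idx hob1 /= /s3 /bb /bf /L0; case: ifP => h1; try case: ifP => h2; lia.
set W2b := W2 ++ [:: ~~ nth false W2 Bw].
have hW2b : wires W2 [:: GNot Bw] = W2b by rewrite /wires /= -cats1.
have sW2b : size W2b = s3.+1 by rewrite size_cat sW2 addn1.
have szf : size (outs Cf) = m by rewrite -hfw -hf /eval size_map.
have ysLt : all (fun a => a < s3)%N ysf.
  apply/allP => o /mapP [o' _ ->]; rewrite /rout /rel_idx /s3 /bb /bf /L0.
  by case: ifP => h1; try case: ifP => h2; lia.
have ioLt : all (fun a => a < s3)%N (iota 0 m).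
  by apply/allP => i; rewrite mem_iota /s3 /bb /bf /L0; lia.
have mono : forall l, all (fun a => a < s3)%N l -> all (fun a => a < s3.+1)%N l.
  by move=> l; apply: sub_all => i /= hi; apply: ltnW.
have hsz : size (iota 0 m) = size ysf by rewrite size_iota size_map szf.
have hacc : (L0 + 1 < s3.+1)%N by rewrite /s3 /bb /bf; lia.
have [C1 C2] := cmp_spec _ _ _ _ _ hsz sW2b hacc (mono _ ioLt) (mono _ ysLt).
have hG : wires (y ++ w) G = wires W2b (cmp s3.+1 (L0 + 1) (iota 0 m) ysf).
  by rewrite /G !wires_cat hW0 hW1 hW2 hW2b.
rewrite hG.
have pW3 : forall i, (i < s3.+1)%N ->
    nth false (wires W2b (cmp s3.+1 (L0 + 1) (iota 0 m) ysf)) i = nth false W2b i.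
  by move=> i hi; rewrite nth_wires // sW2b.
split.
  rewrite size_wires sW2b C2 /s4 /G !size_cat /= !size_map size_iota /s3 /bb /bf C2 size_iota.
  lia.
split.
  rewrite /Ei C1 /W2b all2_cat ?sW2 // nth_catL ?sW2 ?vOne /=; last by rewrite /s3 /bb /bf; lia.
  rewrite eqseq_all -hf /eval -{1}(mkseq_nth false y) hy /mkseq /ysf all2_map2 -[in LHS](map_id (iota 0 m)) all2_map2.
  apply: eq_in_all2' => a b; rewrite mem_iota => ha.
  by rewrite vy ?vf //; lia.
split.
  rewrite pW3; last by apply: ltnW. rewrite nth_catL ?sW2 // /Bw vb hob1 /= hob2 //.
rewrite pW3 // /W2b nth_cat sW2 ltnn subnn /= /Bw vb hob1 /= hob2 //.
Qed.


Lemma evalA1 (y w : seq bool) (fw : seq bool) (bw : bool) :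
  size y = m -> size w = n -> eval Cf w = fw -> size fw = m -> eval Cb w = [:: bw] ->
  eval A1c (y ++ w) = [:: (y == fw) && bw].
Proof.
move=> hy hw hf hfw hb.
have [h1 [h2 [h3 h4]]] := core _ _ _ _ hy hw hf hfw hb.
change (eval A1c (y ++ w)) with
  (map (nth false (wires (y ++ w) (G ++ [:: GAnd Ei Bw]))) [:: s4]).
rewrite wires_cat; move: h1 h2 h3; set W := wires (y ++ w) G => h1 h2 h3.
have -> : wires W [:: GAnd Ei Bw] = rcons W (nth false W Ei && nth false W Bw) by [].
by rewrite /= nth_rcons h1 ltnn eqxx h2 h3.
Qed.

Lemma evalA2 (y w : seq bool) (fw : seq bool) (bw : bool) :
  size y = m -> size w = n -> eval Cf w = fw -> size fw = m -> eval Cb w = [:: bw] ->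
  eval A2c (y ++ w) = [:: ~~ ((y == fw) && ~~ bw)].
Proof.
move=> hy hw hf hfw hb.
have [h1 [h2 [h3 h4]]] := core _ _ _ _ hy hw hf hfw hb.
change (eval A2c (y ++ w)) with
  (map (nth false (wires (y ++ w) (G ++ [:: GAnd Ei s3; GNot s4]))) [:: s4.+1]).
rewrite wires_cat; move: h1 h2 h4; set W := wires (y ++ w) G => h1 h2 h4.
have -> : wires W [:: GAnd Ei s3; GNot s4] =
  rcons (rcons W (nth false W Ei && nth false W s3))
        (~~ nth false (rcons W (nth false W Ei && nth false W s3)) s4) by [].
by rewrite /= !nth_rcons !size_rcons h1 ltnn eqxx /= ltnn eqxx h2 h4.
Qed.

Lemma sizeG : (size G <= 3 + size (gates Cf) + size (gates Cb) + 6 * m)%N.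
Proof.
rewrite /G !size_cat /= !size_map.
have : (size (cmp s3.+1 (L0 + 1) (iota 0 m) ysf) <= 6 * size (iota 0 m))%N.
  elim: (iota 0 m) (ysf) (s3.+1) (L0 + 1) => [|a l IH] [|b t] s acc //=.
  have := IH t (s + 6) (s + 5); lia.
rewrite size_iota; lia.
Qed.

End Core.
Local Open Scope ring_scope.

Lemma final_alg (S1 S2 u v K P : rat) : 0 < K -> 0 < P ->
  u + v / K <= S1 -> v + u / K <= S2 -> K / (K + 1) + P^-1 <= u + v ->
  2%:R^-1 + (P *+ 2)^-1 <= S1 \/ 2%:R^-1 + (P *+ 2)^-1 <= S2.
Proof.
move=> hK hP h1 h2 h.
have hiK : 0 < K^-1 by rewrite invr_gt0.
have hiP : 0 < P^-1 by rewrite invr_gt0.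
have e1 : (u + v) * (1 + K^-1) = u + v + u / K + v / K by ring.
have e2 : (K / (K + 1) + P^-1) * (1 + K^-1) = 1 + P^-1 + P^-1 / K.
  by field; rewrite !gt_eqF // ltr_wpDr // ltW.
have e3 : (P *+ 2)^-1 = P^-1 / 2.
 by rewrite -[in LHS]mulr_natr invfM.
have h3 : (K / (K + 1) + P^-1) * (1 + K^-1) <= (u + v) * (1 + K^-1).
  by rewrite ler_wpM2r // ltW // ltr_wpDr // ltW.
have h4 : 0 <= P^-1 / K by rewrite divr_ge0 // ltW.
rewrite e3; lra.
Qed.

From Stdlib Require Import IndefiniteDescription.

Lemma choose_circ (P : nat -> circuit -> Prop) :
  (forall n, exists C, P n C) -> exists F : nat -> circuit, forall n, P n (F n).
Proof.
move=> h; exists (fun n => proj1_sig (constructive_indefinite_description _ (h n))).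
by move=> n; case: (constructive_indefinite_description _ (h n)).
Qed.

Lemma uniqT (c : nat) (f : forall n, bits n -> bits (n + c)%N) n x x' :
  x \in @T1 (fun n => (n + c)%N) f n -> f n x' = f n x -> x' = x.
Proof.
rewrite inE => /cards1P [z hz] hfx.
have : x \in [set x' | f n x' == f n x] by rewrite inE.
have : x' \in [set x'' | f n x'' == f n x] by rewrite inE hfx.
by rewrite hz !inE => /eqP -> /eqP ->.
Qed.

Arguments uniqT {c f n x x'}.

Lemma prob_ge n (P : pred (bits n)) (A : {set bits n}) :
  A \subset [set x | P x] -> #|A|%:R / (2 ^ n)%:R <= prob P.
Proof.
move=> h; rewrite /prob ler_wpM2r ?invr_ge0 ?ler0n // ler_nat.
exact: subset_leq_card.
Qed.

Theorem theorem6p7 (c : nat) (f : forall n, bits n -> bits (n + c)%N) :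
  @poly_size_computable (fun n => (n + c)%N) f ->
  (exists p : {poly rat}, pos_poly p /\
     infinitely_often (fun n =>
       #|@T1 (fun n => (n + c)%N) f n|%:R / (2 ^ n)%:R >=
       (2 ^ (1 + c))%:R / ((2 ^ (1 + c))%:R + 1) + (p.[n%:R])^-1)) ->
  ~ exists b : forall n, bits n -> bool, @super_core (fun n => (n + c)%N) f b.
Proof.
move=> [qf hqf] [p [hp hio]] [b [[qb hqb] hnot]]; apply: hnot.
have [Cf hCf] := choose_circ _ hqf.
have [Cb hCb] := choose_circ _ hqb.
set A1 := fun n => A1c n c (Cf n) (Cb n).
set A2 := fun n => A2c n c (Cf n) (Cb n).
have ev1 : forall n (y : bits (n + c)),
    ndet_out A1 (fun n => n) n (val y) = [exists w : bits n, (f n w == y) && b n w].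
  move=> n y; apply: eq_existsb => w.
  rewrite /A1 (evalA1 n c (Cf n) (Cb n) (val y) (val w) (val (f n w)) (b n w)) ?size_tuple //;
    try by case: (hCf n) => _ ->.
    by rewrite eqseq_cons andbT eqb_id val_eqE eq_sym.
  by case: (hCb n) => _ ->.
have ev2 : forall n (y : bits (n + c)),
    condet_out A2 (fun n => n) n (val y) = ~~ [exists w : bits n, (f n w == y) && ~~ b n w].
  move=> n y; congr (~~ _); apply: eq_existsb => w.
  rewrite /A2 (evalA2 n c (Cf n) (Cb n) (val y) (val w) (val (f n w)) (b n w)) ?size_tuple //;
    try by case: (hCf n) => _ ->.
    by rewrite eqseq_cons andbT eqbF_neg negbK val_eqE eq_sym.
  by case: (hCb n) => _ ->.
have qf0 : forall n, 0 <= qf.[n%:R].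
  by move=> n; case: (hCf n) => h _; apply: le_trans h.
have qb0 : forall n, 0 <= qb.[n%:R].
  by move=> n; case: (hCb n) => h _; apply: le_trans h.
set q : {poly rat} := qf + qb + ('X + (c%:R : rat)%:P) *+ 6 + (5%:R : rat)%:P.
have qE : forall n, q.[n%:R] = qf.[n%:R] + qb.[n%:R] + (n + c)%:R *+ 6 + 5%:R.
  by move=> n; rewrite /q !hornerD !hornerX !hornerC natrD; lra.
have bnd : forall n k, (k <= 5 + size (gates (Cf n)) + size (gates (Cb n)) + 6 * (n + c))%N ->
    (k%:R : rat) <= q.[n%:R].
  move=> n k hk; rewrite qE; apply: le_trans (_ : (5 + size (gates (Cf n)) + size (gates (Cb n)) + 6 * (n + c))%:R <= _).
    by rewrite ler_nat.
  rewrite !natrD.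
  case: (hCf n) => h1 _; case: (hCb n) => h2 _; move: h1 h2; rewrite /csize => h1 h2.
  lra.
have wit1 : poly_size_witness_family A1 (fun n => n).
  exists q => n; split; [|split] => //.
    apply: bnd; rewrite /A1 /A1c /csize; cbn [gates]; rewrite size_cat.
    have := sizeG n c (Cf n) (Cb n); rewrite /m /=; lia.
  apply: bnd; lia.
have wit2 : poly_size_witness_family A2 (fun n => n).
  exists q => n; split; [|split] => //.
    apply: bnd; rewrite /A2 /A2c /csize; cbn [gates]; rewrite size_cat.
    have := sizeG n c (Cf n) (Cb n); rewrite /m /=; lia.
  apply: bnd; lia.
have pp : pos_poly (p *+ 2).
  by move=> n; rewrite hornerMn pmulrn_lgt0.
exists A1, (fun n => n), A2, (fun n => n), (p *+ 2); split => //.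
move=> N; have [n [hn hT]] := hio N; exists n; split => //.
rewrite hornerMn.
set T := @T1 (fun n => (n + c)%N) f n.
set B := [set x | b n x].
set Ta := T :\: B; set Tb := T :&: B.
have injT : {in Tb &, injective (f n)}.
  by move=> x x' /setIP [hx _] _ /esym /(uniqT hx) ->.
have cTb : #|Tb| = #|f n @: Tb| by rewrite card_in_imset.
have N0 : (0 : rat) < (2 ^ n)%:R by rewrite ltr0n expn_gt0.
have C0 : (0 : rat) < (2 ^ c)%:R by rewrite ltr0n expn_gt0.
have eK : forall d : nat, d%:R / (2 ^ n)%:R / (2 ^ (1 + c))%:R = 2%:R^-1 * (d%:R / (2 ^ (n + c))%:R) :> rat.
  move=> d; rewrite !expnD !natrM expn1; field.
  by rewrite !gt_eqF.
apply: (@final_alg _ _ (#|Ta|%:R / (2 ^ n)%:R) (#|Tb|%:R / (2 ^ n)%:R) (2 ^ (1 + c))%:R).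
- by rewrite ltr0n expn_gt0.
- exact: hp.
- apply: lerD.
    apply: prob_ge; apply/subsetP => x /setDP [hx]; rewrite inE => hb; rewrite inE /=.
    rewrite ev1 hb andbT; apply/negP => /existsP [w /andP [/eqP hw hbw]].
    by move: hb; rewrite -(uniqT hx hw) hbw.
  rewrite eK ler_wpM2l ?invr_ge0 ?ler0n // cTb.
  apply: prob_ge; apply/subsetP => y /imsetP [x /setIP [hx hb] ->].
  by rewrite !inE ev1; apply/existsP; exists x; rewrite eqxx; rewrite inE in hb.
- apply: lerD.
    apply: prob_ge; apply/subsetP => x /setIP [hx]; rewrite inE => hb; rewrite inE /=.
    rewrite ev2 hb andbT; apply/negP => /existsP [w /andP [/eqP hw hbw]].
    by move: hbw; rewrite (uniqT hx hw) hb.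
  have injTa : {in Ta &, injective (f n)}.
    by move=> x x' /setDP [hx _] _ /esym /(uniqT hx) ->.
  rewrite eK ler_wpM2l ?invr_ge0 ?ler0n // -(card_in_imset injTa).
  apply: prob_ge; apply/subsetP => y /imsetP [x /setDP [hx hb] ->].
  rewrite !inE ev2 negbK; apply/existsP; exists x; rewrite eqxx /=.
  by rewrite inE in hb.
- have hc : (#|Ta| + #|Tb| = #|T|)%N by rewrite addnC; exact: cardsID.
  rewrite -mulrDl -natrD hc.
  exact: hT.
Qed.
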